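(* Let $\delta\ge1$ and let $f_{\text{in}}$ be a (possibly randomized, cardinal or ordinal) voting rule such that for every single-electorate instance (any nonempty finite set of agents with unit-sum valuations over $A$) we have $\max_{a\in A}\mathrm{SW}(a)\le \delta\cdot\mathbb{E}[\mathrm{SW}(f_{\text{in}})]$. Let $M$ be the distributed mechanism Uniform-of-$f_{\text{in}}$: each district $d$ selects its representative $a_d$ by applying $f_{\text{in}}$ to the agents of $N_d$, and the winner is $a_d$ for a district $d$ chosen uniformly at random from $D$. Then for every instance with $k$ districts (of arbitrary, possibly unequal, sizes), $\max_{a\in A}\mathrm{SW}(a)\le k\delta\cdot\mathbb{E}[\mathrm{SW}(M)]$; that is, the distortion of $M$ is at most $k\delta$. *)

(* Defs.v *)
From mathcomp Require Import all_boot all_order all_algebra.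
Set Implicit Arguments. Unset Strict Implicit. Unset Printing Implicit Defensive.
Import Order.TTheory GRing.Theory Num.Theory.
Local Open Scope ring_scope.

(* An agent is described by its valuation
   vector v : {ffun A -> R}; an electorate (set of agents) is a sequence of
   valuation vectors.  A (randomized) voting rule maps an electorate to a
   lottery over A, represented as a probability vector {ffun A -> R}.
   Ordinal rules are the special case of rules depending only on the
   rankings induced by the valuations. *)

Definition unit_sum (R : numDomainType) (A : finType) (v : {ffun A -> R}) : Prop :=
  (forall a, 0 <= v a) /\ \sum_(a : A) v a = 1.

Definition valid_electorate (R : numDomainType) (A : finType)
  (N : seq {ffun A -> R}) : Prop :=
  N != [::] /\ forall v, v \in N -> unit_sum v.

Definition is_lottery (R : numDomainType) (A : finType) (p : {ffun A -> R}) : Prop :=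
  (forall a, 0 <= p a) /\ \sum_(a : A) p a = 1.

Definition SW (R : numDomainType) (A : finType) (N : seq {ffun A -> R}) (a : A) : R :=
  \sum_(v <- N) v a.

Definition ESW (R : numDomainType) (A : finType) (sw : A -> R) (p : {ffun A -> R}) : R :=
  \sum_(a : A) p a * sw a.

Definition SW_dist (R : numDomainType) (A : finType) (k : nat)
  (N : 'I_k -> seq {ffun A -> R}) (a : A) : R :=
  \sum_(d < k) SW (N d) a.

(* Uniform-of-f: each district picks a_d ~ f (N d); a uniformly random district's
   representative wins.  Distribution of the winner. *)
Definition uniform_of (R : numFieldType) (A : finType)
  (f : seq {ffun A -> R} -> {ffun A -> R}) (k : nat)
  (N : 'I_k -> seq {ffun A -> R}) : {ffun A -> R} :=
  [ffun a => (k%:R)^-1 * \sum_(d < k) f (N d) a].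

(* Main.v *)
Require Import Defs.
From mathcomp Require Import all_boot all_order all_algebra.
Import Order.TTheory GRing.Theory Num.Theory.
Local Open Scope ring_scope.

Theorem theorem4 (R : realFieldType) (A : finType) (delta : R)
  (f_in : seq {ffun A -> R} -> {ffun A -> R}) :
  1 <= delta ->
  (forall N : seq {ffun A -> R}, valid_electorate N -> is_lottery (f_in N)) ->
  (forall N : seq {ffun A -> R}, valid_electorate N ->
     forall a : A, SW N a <= delta * ESW (SW N) (f_in N)) ->
  forall (k : nat) (N : 'I_k -> seq {ffun A -> R}),
    (0 < k)%N ->
    (forall d, valid_electorate (N d)) ->
    forall a : A,
      SW_dist N a <= k%:R * delta * ESW (SW_dist N) (uniform_of f_in N).
Proof.
move=> hd hlot hdist k N hk hval a.
have SWge0 : forall d b, 0 <= SW (N d) b.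
  move=> d b; rewrite /SW big_seq; apply: sumr_ge0 => v hv.
  by case: (hval d) => _ /(_ v hv) [].
have fge0 : forall d b, 0 <= f_in (N d) b.
  by move=> d b; case: (hlot _ (hval d)) => H _; apply: H.
have key : \sum_(d < k) ESW (SW (N d)) (f_in (N d))
           <= k%:R * ESW (SW_dist N) (uniform_of f_in N).
  rewrite /ESW /uniform_of mulr_sumr.
  under [X in _ <= X]eq_bigr => b _ do
    rewrite ffunE mulrA mulrA mulfV ?pnatr_eq0 -?lt0n // mul1r.
  rewrite exchange_big /=; apply: ler_sum => b _.
  rewrite mulr_suml /SW_dist; apply: ler_sum => d _.
  apply: ler_wpM2l; first exact: fge0.
  rewrite (bigD1 d) //= lerDl; apply: sumr_ge0 => *; exact: SWge0.
have d0 : 0 <= delta by apply: le_trans hd.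
apply: (le_trans (y := delta * \sum_(d < k) ESW (SW (N d)) (f_in (N d)))).
  rewrite /SW_dist mulr_sumr; apply: ler_sum => d _; exact: hdist.
rewrite (mulrC k%:R) -mulrA; exact: ler_wpM2l.
Qed.
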